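(* Let $T$ be a measurable transformation of a space $X$ preserving a probability measure $\mu$, let $f:X\to\mathbb R$ be measurable, and let $n>0$ be an integer. Then $f$ is aperiodic for $T$ if and only if $S_nf=\sum_{k=0}^{n-1}f\circ T^k$ is aperiodic for $T^n$.
   Context: A measurable $g:X\to\mathbb R$ is called periodic for a $\mu$-preserving map $S$ if there exist $c\neq 0$, $d\in\mathbb R$ and a measurable $u:X\to\mathbb R$ such that $g=u-u\circ S+d \bmod c$ $\mu$-almost everywhere; it is aperiodic for $S$ if it is not periodic, i.e. for every measurable $u$ and every $\lambda\ne0$, $g-u+u\circ S\bmod\lambda$ is not $\mu$-a.e. constant. *)

(* Defs.v *)
From mathcomp Require Import all_boot all_order all_algebra.
From mathcomp Require Import all_classical all_reals all_analysis.
Set Implicit Arguments. Unset Strict Implicit. Unset Printing Implicit Defensive.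
Import Order.TTheory GRing.Theory Num.Theory.
Local Open Scope classical_set_scope.
Local Open Scope ring_scope.

Definition measure_preserving d (X : measurableType d) (R : realType)
  (mu : {measure set X -> \bar R}) (S : X -> X) : Prop :=
  measurable_fun setT S /\
  forall A : set X, measurable A -> mu (S @^-1` A) = mu A.

Definition periodic d (X : measurableType d) (R : realType)
  (mu : {measure set X -> \bar R}) (S : X -> X) (g : X -> R) : Prop :=
  exists (c e : R) (u : X -> R),
    c != 0 /\ measurable_fun setT u /\
    {ae mu, forall x, exists k : int, g x = u x - u (S x) + e + k%:~R * c}.

Definition aperiodic d (X : measurableType d) (R : realType)
  (mu : {measure set X -> \bar R}) (S : X -> X) (g : X -> R) : Prop :=
  ~ periodic mu S g.

Definition birkhoff_sum (X : Type) (R : realType) (T : X -> X) (n : nat)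
  (f : X -> R) : X -> R :=
  fun x => \sum_(0 <= k < n) f (iter k T x).

(* Main.v *)
Require Import Defs.
From mathcomp Require Import all_boot all_order all_algebra.
From mathcomp Require Import all_classical all_reals all_analysis.
From mathcomp Require Import ring lra.
Import Order.TTheory GRing.Theory Num.Theory.
Local Open Scope classical_set_scope.
Local Open Scope ring_scope.

Lemma iter_meas d (X : measurableType d) (T : X -> X) j :
  measurable_fun setT T -> measurable_fun setT (iter j T).
Proof.
move=> mT; elim: j => [|j IH] /=; first exact: measurable_id.
exact: (measurableT_comp mT IH).
Qed.

Lemma ae_pull d (X : measurableType d) (R : realType)
  (mu : {measure set X -> \bar R}) (T : X -> X) (P : X -> Prop) :
  measure_preserving mu T ->
  {ae mu, forall x, P x} -> {ae mu, forall x, P (T x)}.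
Proof.
move=> [mT pT] [N [mN muN PN]].
exists (T @^-1` N); split.
- by have := mT measurableT N mN; rewrite setTI.
- by rewrite pT.
- by move=> x /= Hx; apply: PN.
Qed.

Lemma ae_iter d (X : measurableType d) (R : realType)
  (mu : {measure set X -> \bar R}) (T : X -> X) (P : X -> Prop) j :
  measure_preserving mu T ->
  {ae mu, forall x, P x} -> {ae mu, forall x, P (iter j T x)}.
Proof.
move=> mp H; elim: j => [|j IH] //.
have := @ae_pull _ _ _ _ _ (fun y => P (iter j T y)) mp IH.
by apply: filterS => x; rewrite iterSr.
Qed.

Lemma ae_all d (X : measurableType d) (R : realType)
  (mu : {measure set X -> \bar R}) (T : X -> X) (P : X -> Prop) m :
  measure_preserving mu T ->
  {ae mu, forall x, P x} ->
  {ae mu, forall x, forall j, (j < m)%N -> P (iter j T x)}.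
Proof.
move=> mp H; elim: m => [|m IH].
  by apply: filterS (filterT) => x _ j.
have := @ae_iter _ _ _ _ _ _ m mp H.
apply: filterS2 IH => x H1 H2 j; rewrite ltnS leq_eqVlt => /orP[/eqP->//|].
exact: H1.
Qed.

Lemma bsum_per (X : Type) (R : realType) (T : X -> X) (f u : X -> R) (c e : R) m x :
  (forall j, (j < m)%N -> exists k : int,
      f (iter j T x) = u (iter j T x) - u (T (iter j T x)) + e + k%:~R * c) ->
  exists k : int, birkhoff_sum T m f x = u x - u (iter m T x) + m%:R * e + k%:~R * c.
Proof.
elim: m => [|m IH] H.
  by exists 0; rewrite /birkhoff_sum big_geq //=; ring.
have [k Hk] := IH (fun j hj => H j (ltnW hj)).
have [k' Hk'] := H m (ltnSn m).
exists (k + k'); rewrite /birkhoff_sum big_nat_recr //= -/(birkhoff_sum T m f x).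
by rewrite Hk Hk' intrD mulrDl -natr1; ring.
Qed.

Lemma bsum_meas d (X : measurableType d) (R : realType) (T : X -> X) (f : X -> R) m :
  measurable_fun setT T -> measurable_fun setT f ->
  measurable_fun setT (birkhoff_sum T m f).
Proof.
move=> mT mf; apply: measurable_sum => k.
by apply: measurableT_comp => //; exact: iter_meas.
Qed.

Lemma bsum_shift (X : Type) (R : realType) (T : X -> X) (f : X -> R) j x :
  birkhoff_sum T j f (T x) = birkhoff_sum T j.+1 f x - f x.
Proof.
rewrite /birkhoff_sum big_nat_recl //= addrC addKr.
by apply: eq_bigr => i _; rewrite -iterSr.
Qed.

Theorem lemma2p1 (d : measure_display) (X : measurableType d) (R : realType)
  (mu : probability X R) (T : X -> X) (f : X -> R) (n : nat) :
  measure_preserving mu T ->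
  measurable_fun setT f ->
  (0 < n)%N ->
  aperiodic mu T f <-> aperiodic mu (iter n T) (birkhoff_sum T n f).
Proof.
move=> mp mf n0; have mT := mp.1.
split => H1 H2; apply: H1.
-
  have [c [e [v [c0 [mv hae]]]]] := H2.
  have nn0 : (n%:R : R) != 0 by rewrite pnatr_eq0 -lt0n.
  exists (c / n%:R), (e / n%:R),
    (fun x => n%:R^-1 * \sum_(0 <= j < n) (v (iter j T x) + birkhoff_sum T j f x)).
  split; first by rewrite mulf_neq0 // invr_eq0.
  split.
    apply: (@measurable_realfun.measurable_funM _ _ _ _ (fun=> n%:R^-1)); first exact: measurable_cst.
    apply: measurable_sum => j; apply: measurable_realfun.measurable_funD.
      by apply: measurableT_comp => //; exact: iter_meas.
    exact: bsum_meas.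
  apply: filterS hae => x [k Hk]; exists k.
  have key : \sum_(0 <= j < n) (v (iter j T x) + birkhoff_sum T j f x) -
     \sum_(0 <= j < n) (v (iter j T (T x)) + birkhoff_sum T j f (T x)) =
     v x - v (iter n T x) - birkhoff_sum T n f x + n%:R * f x.
    rewrite -sumrB.
    rewrite (telescope_sumr_eq (fun k => - (v (iter k T x) + birkhoff_sum T k f x) + k%:R * f x)) //.
      by rewrite [birkhoff_sum T 0 f x]/birkhoff_sum big_geq //=; ring.
    move=> j _; rewrite bsum_shift -iterSr -natr1; ring.
  rewrite -mulrBr key Hk; field; exact: nn0.
-
  have [c [e [u [c0 [mu' hae]]]]] := H2.
  exists c, (n%:R * e), u; split => //; split => //.
  have := @ae_all _ _ _ _ _ _ n mp hae.
  apply: filterS => x Hx.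
  have [k Hk] := @bsum_per X R T f u c e n x Hx.
  by exists k; rewrite Hk.
Qed.
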